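(* Let $\boldsymbol{m}\in\mathbb{N}^2$ and $\boldsymbol{\gamma}=(\gamma_1,\gamma_2)\in\mathbb{Z}^2$ with $\gamma_1\equiv\gamma_2\pmod 2$. If $\sum_{\boldsymbol{i}\in\mathrm{I}^{(\boldsymbol{m})}}w_{\boldsymbol{i}}\,\chi_{\boldsymbol{\gamma}}(\boldsymbol{i})\neq0$, then there exist $h_1,h_2\in\mathbb{Z}$ with $\gamma_1=2h_1m_1$, $\gamma_2=2h_2m_2$ and $h_1+h_2$ even. Conversely, if such $h_1,h_2$ exist, then $\sum_{\boldsymbol{i}\in\mathrm{I}^{(\boldsymbol{m})}}w_{\boldsymbol{i}}\,\chi_{\boldsymbol{\gamma}}(\boldsymbol{i})=1$.
   Context: $\mathrm{I}^{(\boldsymbol{m})}=\{(i_1,i_2)\in\mathbb{Z}^2:\ 0\le i_1\le m_1,\ -2m_2<i_2\le 2m_2,\ i_2\le0\text{ if }i_1=m_1,\ i_1+i_2\text{ even}\}$. Weights: $w_{\boldsymbol{i}}=\frac{1}{4m_1m_2}$ if $i_1=0$ and $w_{\boldsymbol{i}}=\frac{2}{4m_1m_2}$ if $0<i_1\le m_1$. For $\boldsymbol{\gamma}\in\mathbb{Z}^2$, $\chi_{\boldsymbol{\gamma}}:\mathrm{I}^{(\boldsymbol{m})}\to\mathbb{C}$, $\chi_{\boldsymbol{\gamma}}(\boldsymbol{i})=\cos\!\big(\frac{\gamma_1i_1\pi}{2m_1}\big)e^{\mathrm{i}\gamma_2i_2\pi/(2m_2)}$. *)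

(* Defs.v *)
From Stdlib Require Import Reals ZArith List Bool.
Import ListNotations.
Open Scope R_scope.

Definition Cx : Type := (R * R)%type.
Definition Cadd (z w : Cx) : Cx := (fst z + fst w, snd z + snd w).
Definition Cscale (r : R) (z : Cx) : Cx := (r * fst z, r * snd z).
Definition Czero : Cx := (0, 0).
Definition Cone : Cx := (1, 0).

Definition in_I (m1 m2 : nat) (i : Z * Z) : bool :=
  let (i1, i2) := i in
  ((0 <=? i1) && (i1 <=? Z.of_nat m1)
   && (- 2 * Z.of_nat m2 <? i2) && (i2 <=? 2 * Z.of_nat m2)
   && (negb (i1 =? Z.of_nat m1) || (i2 <=? 0))
   && Z.even (i1 + i2))%Z.

Definition I_list (m1 m2 : nat) : list (Z * Z) :=
  filter (in_I m1 m2)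
    (list_prod (map Z.of_nat (seq 0 (S m1)))
               (map (fun k => (Z.of_nat k - 2 * Z.of_nat m2 + 1)%Z) (seq 0 (4 * m2)))).

Definition weight (m1 m2 : nat) (i : Z * Z) : R :=
  (if (fst i =? 0)%Z then 1 else 2) / (4 * INR m1 * INR m2).

(* chi_gamma(i) = cos(g1 i1 pi/(2 m1)) * exp(I g2 i2 pi/(2 m2)) *)
Definition chi (m1 m2 : nat) (g : Z * Z) (i : Z * Z) : Cx :=
  let c := cos (IZR (fst g) * IZR (fst i) * PI / (2 * INR m1)) in
  let t := IZR (snd g) * IZR (snd i) * PI / (2 * INR m2) in
  (c * cos t, c * sin t).

Definition wsum (m1 m2 : nat) (g : Z * Z) : Cx :=
  fold_right Cadd Czero (map (fun i => Cscale (weight m1 m2 i) (chi m1 m2 g i)) (I_list m1 m2)).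

(* Main.v *)
Require Import Defs.
From Stdlib Require Import Reals ZArith List Lia Lra Bool Classical.
Open Scope R_scope.

Definition fsum {A} (l : list A) (f : A -> R) : R := fold_right (fun a acc => f a + acc) 0 l.

Lemma fsum_app {A} (l1 l2 : list A) f : fsum (l1 ++ l2) f = fsum l1 f + fsum l2 f.
Proof. induction l1; simpl; [ring| rewrite IHl1; ring]. Qed.

Lemma fsum_map {A B} (h : A -> B) l f : fsum (map h l) f = fsum l (fun a => f (h a)).
Proof. induction l; simpl; [ring| rewrite IHl; ring]. Qed.

Lemma fsum_filter {A} (P : A -> bool) l f : fsum (filter P l) f = fsum l (fun a => if P a then f a else 0).
Proof. induction l; simpl; [ring|]. destruct (P a); simpl; rewrite IHl; ring. Qed.

Lemma fsum_prod {A B} (l1 : list A) (l2 : list B) f :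
  fsum (list_prod l1 l2) f = fsum l1 (fun a => fsum l2 (fun b => f (a, b))).
Proof. induction l1; simpl; [ring|]. rewrite fsum_app, fsum_map, IHl1. ring. Qed.

Lemma fsum_ext {A} (l : list A) f g : (forall a, In a l -> f a = g a) -> fsum l f = fsum l g.
Proof. induction l; simpl; intros H; [ring|]. rewrite H by auto. rewrite IHl by auto. ring. Qed.

Lemma fsum_plus {A} (l : list A) f g : fsum l (fun a => f a + g a) = fsum l f + fsum l g.
Proof. induction l; simpl; [ring| rewrite IHl; ring]. Qed.

Lemma fsum_scal {A} (l : list A) c f : fsum l (fun a => c * f a) = c * fsum l f.
Proof. induction l; simpl; [ring| rewrite IHl; ring]. Qed.

Lemma fsum_const s n c : fsum (seq s n) (fun _ => c) = INR n * c.
Proof. revert s; induction n; intros s; [simpl; ring|].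
  change (c + fsum (seq (S s) n) (fun _ => c) = INR (S n) * c). rewrite IHn, S_INR. ring. Qed.

Lemma fsum_zero {A} (l : list A) f : (forall a, In a l -> f a = 0) -> fsum l f = 0.
Proof. induction l; simpl; intros H; [ring|]. rewrite H by auto. rewrite IHl by auto. ring. Qed.

Lemma fsum_pairs n f : fsum (seq 0 (2*n)) f = fsum (seq 0 n) (fun j => f (2*j)%nat + f (2*j+1)%nat).
Proof.
  induction n; [simpl; ring|].
  replace (2 * S n)%nat with (2*n + 2)%nat by lia.
  rewrite seq_app, (seq_S n 0), !fsum_app, IHn.
  replace (seq (0 + 2*n) 2) with ((2*n)%nat :: (2*n+1)%nat :: nil)
    by (simpl; f_equal; f_equal; lia).
  simpl. ring.
Qed.

Lemma in_I_spec m1 m2 i1 i2 : in_I m1 m2 (i1, i2) = true <->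
  ((0 <= i1 <= Z.of_nat m1) /\ (-2 * Z.of_nat m2 < i2 <= 2 * Z.of_nat m2) /\
   (i1 <> Z.of_nat m1 \/ i2 <= 0) /\ Z.Even (i1 + i2))%Z.
Proof.
  unfold in_I. rewrite !andb_true_iff, orb_true_iff, negb_true_iff, Z.eqb_neq,
    !Z.leb_le, Z.ltb_lt, Z.even_spec. tauto.
Qed.

Definition par (n1 : nat) : nat := if Nat.even n1 then 1%nat else 0%nat.
Definition I2 (m2 n1 j : nat) : Z := (Z.of_nat (2*j + par n1) - 2 * Z.of_nat m2 + 1)%Z.
Definition Nrow (m1 m2 n1 : nat) : nat := if Nat.eqb n1 m1 then m2 else (2*m2)%nat.

Lemma par_cases n1 : (exists q, n1 = 2*q /\ par n1 = 1)%nat \/ (exists q, n1 = 2*q+1 /\ par n1 = 0)%nat.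
Proof.
  unfold par. destruct (Nat.Even_or_Odd n1) as [[q Hq]|[q Hq]]; subst n1.
  - left. exists q. rewrite Nat.even_mul. simpl. auto.
  - right. exists q. rewrite Nat.even_add, Nat.even_mul. simpl. auto.
Qed.

Lemma row_lemma m1 m2 n1 f : (n1 <= m1)%nat ->
  fsum (seq 0 (4*m2)) (fun k => if in_I m1 m2 (Z.of_nat n1, (Z.of_nat k - 2 * Z.of_nat m2 + 1)%Z)
                                then f (Z.of_nat n1, (Z.of_nat k - 2 * Z.of_nat m2 + 1)%Z) else 0)
  = fsum (seq 0 (Nrow m1 m2 n1)) (fun j => f (Z.of_nat n1, I2 m2 n1 j)).
Proof.
  intros Hn.
  replace (4*m2)%nat with (2*(2*m2))%nat by lia. rewrite fsum_pairs.
  transitivity (fsum (seq 0 (2*m2)) (fun j => if (Nat.eqb n1 m1 && Nat.leb m2 j)%bool then 0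
                                          else f (Z.of_nat n1, I2 m2 n1 j))).
  - apply fsum_ext. intros j Hj. apply in_seq in Hj. unfold I2.
    destruct (par_cases n1) as [[q [Hq Hp]]|[q [Hq Hp]]]; rewrite Hp.
    + destruct (in_I m1 m2 (Z.of_nat n1, (Z.of_nat (2 * j) - 2 * Z.of_nat m2 + 1)%Z)) eqn:E1.
      { apply in_I_spec in E1. destruct E1 as (_&_&_&[z Hz]). lia. }
      destruct (in_I m1 m2 (Z.of_nat n1, (Z.of_nat (2 * j + 1) - 2 * Z.of_nat m2 + 1)%Z)) eqn:E2;
      destruct (Nat.eqb_spec n1 m1); destruct (Nat.leb_spec m2 j); simpl.
      * apply in_I_spec in E2. lia.
      * ring.
      * ring.
      * ring.
      * ring.
      * exfalso. assert (in_I m1 m2 (Z.of_nat n1, (Z.of_nat (2 * j + 1) - 2 * Z.of_nat m2 + 1)%Z) = true);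
          [|congruence]. apply in_I_spec. repeat split; try lia.
        exists (Z.of_nat q + Z.of_nat j + 1 - Z.of_nat m2)%Z. lia.
      * exfalso. assert (in_I m1 m2 (Z.of_nat n1, (Z.of_nat (2 * j + 1) - 2 * Z.of_nat m2 + 1)%Z) = true);
          [|congruence]. apply in_I_spec. repeat split; try lia.
        exists (Z.of_nat q + Z.of_nat j + 1 - Z.of_nat m2)%Z. lia.
      * exfalso. assert (in_I m1 m2 (Z.of_nat n1, (Z.of_nat (2 * j + 1) - 2 * Z.of_nat m2 + 1)%Z) = true);
          [|congruence]. apply in_I_spec. repeat split; try lia.
        exists (Z.of_nat q + Z.of_nat j + 1 - Z.of_nat m2)%Z. lia.
    + destruct (in_I m1 m2 (Z.of_nat n1, (Z.of_nat (2 * j + 1) - 2 * Z.of_nat m2 + 1)%Z)) eqn:E1.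
      { apply in_I_spec in E1. destruct E1 as (_&_&_&[z Hz]). lia. }
      replace (2*j+0)%nat with (2*j)%nat by lia.
      destruct (in_I m1 m2 (Z.of_nat n1, (Z.of_nat (2 * j) - 2 * Z.of_nat m2 + 1)%Z)) eqn:E2;
      destruct (Nat.eqb_spec n1 m1); destruct (Nat.leb_spec m2 j); simpl.
      * apply in_I_spec in E2. lia.
      * ring.
      * ring.
      * ring.
      * ring.
      * exfalso. assert (in_I m1 m2 (Z.of_nat n1, (Z.of_nat (2 * j) - 2 * Z.of_nat m2 + 1)%Z) = true);
          [|congruence]. apply in_I_spec. repeat split; try lia.
        exists (Z.of_nat q + Z.of_nat j + 1 - Z.of_nat m2)%Z. lia.
      * exfalso. assert (in_I m1 m2 (Z.of_nat n1, (Z.of_nat (2 * j) - 2 * Z.of_nat m2 + 1)%Z) = true);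
          [|congruence]. apply in_I_spec. repeat split; try lia.
        exists (Z.of_nat q + Z.of_nat j + 1 - Z.of_nat m2)%Z. lia.
      * exfalso. assert (in_I m1 m2 (Z.of_nat n1, (Z.of_nat (2 * j) - 2 * Z.of_nat m2 + 1)%Z) = true);
          [|congruence]. apply in_I_spec. repeat split; try lia.
        exists (Z.of_nat q + Z.of_nat j + 1 - Z.of_nat m2)%Z. lia.
  - unfold Nrow. destruct (Nat.eqb_spec n1 m1); simpl.
    + replace (2*m2)%nat with (m2+m2)%nat by lia. rewrite seq_app, fsum_app.
      rewrite (fsum_zero (seq (0+m2) _)).
      * rewrite Rplus_0_r. apply fsum_ext. intros j Hj. apply in_seq in Hj.
        destruct (Nat.leb_spec m2 j); [lia|reflexivity].
      * intros j Hj. apply in_seq in Hj. destruct (Nat.leb_spec m2 j); [reflexivity|lia].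
    + reflexivity.
Qed.

Lemma I_sum m1 m2 f : fsum (I_list m1 m2) f =
  fsum (seq 0 (S m1)) (fun n1 => fsum (seq 0 (Nrow m1 m2 n1)) (fun j => f (Z.of_nat n1, I2 m2 n1 j))).
Proof.
  unfold I_list. rewrite fsum_filter, fsum_prod, fsum_map. apply fsum_ext.
  intros n1 Hn1. apply in_seq in Hn1. rewrite fsum_map. apply row_lemma. lia.
Qed.

Lemma wsum_eq m1 m2 g : wsum m1 m2 g =
  (fsum (I_list m1 m2) (fun i => weight m1 m2 i * fst (chi m1 m2 g i)),
   fsum (I_list m1 m2) (fun i => weight m1 m2 i * snd (chi m1 m2 g i))).
Proof.
  unfold wsum. induction (I_list m1 m2); simpl; [reflexivity|].
  rewrite IHl. reflexivity.
Qed.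

Lemma fsum_single {A} (x : A) f : fsum (x :: nil) f = f x + 0.
Proof. reflexivity. Qed.

Lemma geo_cos a t n : 2 * sin t * fsum (seq 0 n) (fun j => cos (a + 2 * INR j * t)) =
  sin (a - t + 2 * INR n * t) - sin (a - t).
Proof.
  induction n.
  - simpl. replace (a - t + 2 * 0 * t) with (a - t) by ring. ring.
  - rewrite seq_S, fsum_app, Rmult_plus_distr_l, IHn, fsum_single, Nat.add_0_l, S_INR.
    replace (a - t + 2 * (INR n + 1) * t) with ((a + 2 * INR n * t) + t) by ring.
    replace (a - t + 2 * INR n * t) with ((a + 2 * INR n * t) - t) by ring.
    rewrite sin_plus, (sin_minus (a + 2 * INR n * t)). ring.
Qed.

Lemma geo_sin a t n : 2 * sin t * fsum (seq 0 n) (fun j => sin (a + 2 * INR j * t)) =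
  cos (a - t) - cos (a - t + 2 * INR n * t).
Proof.
  induction n.
  - simpl. replace (a - t + 2 * 0 * t) with (a - t) by ring. ring.
  - rewrite seq_S, fsum_app, Rmult_plus_distr_l, IHn, fsum_single, Nat.add_0_l, S_INR.
    replace (a - t + 2 * (INR n + 1) * t) with ((a + 2 * INR n * t) + t) by ring.
    replace (a - t + 2 * INR n * t) with ((a + 2 * INR n * t) - t) by ring.
    rewrite cos_plus, (cos_minus (a + 2 * INR n * t)). ring.
Qed.

Lemma sin_2kpi x z : sin (x + 2 * IZR z * PI) = sin x.
Proof.
  destruct z.
  - simpl. f_equal. ring.
  - rewrite <- (positive_nat_Z p), <- INR_IZR_INZ. apply sin_period.
  - replace (IZR (Z.neg p)) with (- INR (Pos.to_nat p))
      by (rewrite INR_IZR_INZ, positive_nat_Z; reflexivity).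
    rewrite <- (sin_period (x + 2 * - INR (Pos.to_nat p) * PI) (Pos.to_nat p)). f_equal. ring.
Qed.

Lemma cos_2kpi x z : cos (x + 2 * IZR z * PI) = cos x.
Proof.
  destruct z.
  - simpl. f_equal. ring.
  - rewrite <- (positive_nat_Z p), <- INR_IZR_INZ. apply cos_period.
  - replace (IZR (Z.neg p)) with (- INR (Pos.to_nat p))
      by (rewrite INR_IZR_INZ, positive_nat_Z; reflexivity).
    rewrite <- (cos_period (x + 2 * - INR (Pos.to_nat p) * PI) (Pos.to_nat p)). f_equal. ring.
Qed.

Lemma geo_zero a t n z : sin t <> 0 -> 2 * INR n * t = 2 * IZR z * PI ->
  fsum (seq 0 n) (fun j => cos (a + 2 * INR j * t)) = 0 /\
  fsum (seq 0 n) (fun j => sin (a + 2 * INR j * t)) = 0.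
Proof.
  intros Hs Hn. pose proof (geo_cos a t n) as H1. pose proof (geo_sin a t n) as H2.
  rewrite Hn, sin_2kpi in H1. rewrite Hn, cos_2kpi in H2.
  split.
  - apply (Rmult_eq_reg_l (2 * sin t)); [rewrite H1; ring|lra].
  - apply (Rmult_eq_reg_l (2 * sin t)); [rewrite H2; ring|lra].
Qed.

Lemma IZR_I2 m2 n1 j : IZR (I2 m2 n1 j) = IZR (Z.of_nat (par n1) - 2 * Z.of_nat m2 + 1) + 2 * INR j.
Proof.
  rewrite INR_IZR_INZ. rewrite <- mult_IZR, <- plus_IZR. f_equal. unfold I2. lia.
Qed.

Definition wt m1 m2 (n1 : nat) : R := (if (Z.of_nat n1 =? 0)%Z then 1 else 2) / (4 * INR m1 * INR m2).

Lemma caseA m1 m2 g1 g2 : (1 <= m1)%nat -> (1 <= m2)%nat -> (g1 mod 2 = g2 mod 2)%Z ->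
  ~ (exists h2, g2 = (2 * h2 * Z.of_nat m2)%Z) -> wsum m1 m2 (g1, g2) = Czero.
Proof.
  intros hm1 hm2 hg Hno.
  assert (HM2 : INR m2 <> 0) by (apply not_0_INR; lia).
  assert (HM1 : INR m1 <> 0) by (apply not_0_INR; lia).
  set (t := IZR g2 * PI / (2 * INR m2)).
  assert (Hst : sin t <> 0).
  { intros Hs. apply sin_eq_0_0 in Hs. destruct Hs as [k Hk]. apply Hno. exists k.
    apply eq_IZR. rewrite !mult_IZR, <- INR_IZR_INZ.
    replace (IZR g2) with (t * (2 * INR m2) / PI) by (unfold t; field; split; [exact HM2|exact PI_neq0]).
    rewrite Hk. field. exact PI_neq0. }
  assert (Hrow : forall n1 (c : R), (n1 <= m1)%nat ->
     (n1 <> m1 \/ c = 0 \/ exists z, 2 * INR m2 * t = 2 * IZR z * PI) ->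
     fsum (seq 0 (Nrow m1 m2 n1)) (fun j => c * cos (IZR g2 * IZR (I2 m2 n1 j) * PI / (2 * INR m2))) = 0 /\
     fsum (seq 0 (Nrow m1 m2 n1)) (fun j => c * sin (IZR g2 * IZR (I2 m2 n1 j) * PI / (2 * INR m2))) = 0).
  { intros n1 c Hn1 Hc.
    set (a := IZR (Z.of_nat (par n1) - 2 * Z.of_nat m2 + 1) * t).
    assert (Harg : forall j, IZR g2 * IZR (I2 m2 n1 j) * PI / (2 * INR m2) = a + 2 * INR j * t).
    { intros j. rewrite IZR_I2. unfold a, t. field. exact HM2. }
    rewrite !(fsum_ext _ _ _ (fun j _ => f_equal (fun x => c * _ x) (Harg j))) .
    rewrite !fsum_scal.
    destruct (Nat.eqb_spec n1 m1) as [E|E].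
    - destruct Hc as [Hc|[Hc|[z Hz]]]; [contradiction| rewrite Hc; split; ring |].
      unfold Nrow. rewrite E, Nat.eqb_refl.
      destruct (geo_zero a t m2 z Hst Hz) as [-> ->]. split; ring.
    - unfold Nrow. destruct (Nat.eqb_spec n1 m1); [contradiction|].
      assert (Hz : 2 * INR (2 * m2) * t = 2 * IZR g2 * PI).
      { rewrite mult_INR. unfold t. simpl. field. exact HM2. }
      destruct (geo_zero a t (2*m2) g2 Hst Hz) as [-> ->]. split; ring. }
  assert (Hc : forall n1, (n1 <= m1)%nat -> n1 <> m1 \/
      cos (IZR g1 * IZR (Z.of_nat n1) * PI / (2 * INR m1)) = 0 \/
      exists z, 2 * INR m2 * t = 2 * IZR z * PI).
  { intros n1 Hn1. destruct (Nat.eq_dec n1 m1) as [->|]; [right|left; auto].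
    pose proof (Z.mod_pos_bound g1 2) as Hb. pose proof (Z_div_mod_eq_full g1 2).
    pose proof (Z_div_mod_eq_full g2 2).
    destruct (Z.eq_dec (g1 mod 2) 0) as [E|E].
    - right. exists (g2 / 2)%Z. unfold t.
      replace (IZR g2) with (2 * IZR (g2/2)) by (rewrite <- mult_IZR; f_equal; lia).
      field. exact HM2.
    - left. apply cos_eq_0_1. exists (g1 / 2)%Z.
      replace (IZR g1) with (2 * IZR (g1/2) + 1) by (rewrite <- mult_IZR, <- plus_IZR; f_equal; lia).
      rewrite <- INR_IZR_INZ. field. exact HM1. }
  rewrite wsum_eq, !I_sum. unfold Czero. f_equal.
  - apply fsum_zero. intros n1 Hn1. apply in_seq in Hn1.
    unfold chi, weight; simpl fst; simpl snd.
    rewrite (fsum_ext _ _ (fun j => ((if (Z.of_nat n1 =? 0)%Z then 1 else 2) / (4 * INR m1 * INR m2) *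
       cos (IZR g1 * IZR (Z.of_nat n1) * PI / (2 * INR m1))) *
       cos (IZR g2 * IZR (I2 m2 n1 j) * PI / (2 * INR m2)))) by (intros; ring).
    apply Hrow; [lia|]. destruct (Hc n1 ltac:(lia)) as [H|[H|H]]; auto.
    right; left. rewrite H. ring.
  - apply fsum_zero. intros n1 Hn1. apply in_seq in Hn1.
    unfold chi, weight; simpl fst; simpl snd.
    rewrite (fsum_ext _ _ (fun j => ((if (Z.of_nat n1 =? 0)%Z then 1 else 2) / (4 * INR m1 * INR m2) *
       cos (IZR g1 * IZR (Z.of_nat n1) * PI / (2 * INR m1))) *
       sin (IZR g2 * IZR (I2 m2 n1 j) * PI / (2 * INR m2)))) by (intros; ring).
    apply Hrow; [lia|]. destruct (Hc n1 ltac:(lia)) as [H|[H|H]]; auto.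
    right; left. rewrite H. ring.
Qed.

Lemma I2_par m2 n1 j : exists tt, I2 m2 n1 j = (Z.of_nat n1 + 2 * tt)%Z.
Proof.
  unfold I2. destruct (par_cases n1) as [[q [Hq Hp]]|[q [Hq Hp]]]; rewrite Hp.
  - exists (Z.of_nat j + 1 - Z.of_nat m2 - Z.of_nat q)%Z. lia.
  - exists (Z.of_nat j - Z.of_nat m2 - Z.of_nat q)%Z. lia.
Qed.

Lemma coef m1 m2 n1 : (1 <= m1)%nat -> (1 <= m2)%nat -> (n1 <= m1)%nat ->
  INR (Nrow m1 m2 n1) * wt m1 m2 n1 =
  1 / (2 * INR m1) * ((if Nat.ltb n1 m1 then 1 else 0) + (if Nat.ltb 0 n1 then 1 else 0)).
Proof.
  intros hm1 hm2 Hn.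
  assert (HM2 : INR m2 <> 0) by (apply not_0_INR; lia).
  assert (HM1 : INR m1 <> 0) by (apply not_0_INR; lia).
  unfold Nrow, wt.
  destruct (Nat.eqb_spec n1 m1); destruct (Nat.ltb_spec n1 m1); destruct (Nat.ltb_spec 0 n1);
    destruct (Z.eqb_spec (Z.of_nat n1) 0); try lia; rewrite ?mult_INR; simpl; field; auto.
Qed.

Definition psi m1 g1 h2 := IZR g1 * PI / (2 * INR m1) + IZR h2 * PI.

Lemma caseB m1 m2 g1 h2 : (1 <= m1)%nat -> (1 <= m2)%nat ->
  wsum m1 m2 (g1, (2 * h2 * Z.of_nat m2)%Z) =
  (1 / (2 * INR m1) * (fsum (seq 0 m1) (fun n => cos (INR n * psi m1 g1 h2)) +
                       fsum (seq 0 m1) (fun n => cos (INR (S n) * psi m1 g1 h2))), 0).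
Proof.
  intros hm1 hm2.
  assert (HM2 : INR m2 <> 0) by (apply not_0_INR; lia).
  assert (HM1 : INR m1 <> 0) by (apply not_0_INR; lia).
  assert (Harg : forall n1 j, exists tt,
     IZR (2 * h2 * Z.of_nat m2) * IZR (I2 m2 n1 j) * PI / (2 * INR m2) =
     IZR h2 * INR n1 * PI + 2 * IZR tt * PI).
  { intros n1 j. destruct (I2_par m2 n1 j) as [tt Ht]. exists (h2 * tt)%Z. rewrite Ht.
    rewrite !mult_IZR, plus_IZR, mult_IZR, <- !INR_IZR_INZ. field. auto. }
  assert (Hsy : forall n1, sin (IZR h2 * INR n1 * PI) = 0).
  { intros n1. apply sin_eq_0_1. exists (h2 * Z.of_nat n1)%Z. rewrite mult_IZR, <- INR_IZR_INZ. ring. }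
  rewrite wsum_eq, !I_sum. f_equal.
  - transitivity (fsum (seq 0 (S m1)) (fun n1 => 1 / (2 * INR m1) *
        (((if Nat.ltb n1 m1 then 1 else 0) * cos (INR n1 * psi m1 g1 h2)) +
         ((if Nat.ltb 0 n1 then 1 else 0) * cos (INR n1 * psi m1 g1 h2))))).
    + apply fsum_ext. intros n1 Hn1. apply in_seq in Hn1.
      rewrite (fsum_ext _ _ (fun _ => wt m1 m2 n1 * cos (INR n1 * psi m1 g1 h2))).
      * rewrite fsum_const, <- Rmult_assoc, coef by lia. ring.
      * intros j _. unfold chi, weight, wt; cbn [fst snd].
        destruct (Harg n1 j) as [tt ->]. rewrite cos_2kpi.
        replace (INR n1 * psi m1 g1 h2) with
          (IZR g1 * IZR (Z.of_nat n1) * PI / (2 * INR m1) + IZR h2 * INR n1 * PI)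
          by (unfold psi; rewrite <- INR_IZR_INZ; field; auto).
        rewrite cos_plus, Hsy. ring.
    + rewrite fsum_scal, fsum_plus. f_equal. f_equal.
      * rewrite seq_S, fsum_app, fsum_single. rewrite Nat.add_0_l, Nat.ltb_irrefl.
        rewrite Rmult_0_l, !Rplus_0_r. apply fsum_ext. intros n Hn. apply in_seq in Hn.
        destruct (Nat.ltb_spec n m1); [ring|lia].
      * change (seq 0 (S m1)) with (0%nat :: seq 1 m1). rewrite <- (seq_shift m1 0).
        change (fsum (0%nat :: map S (seq 0 m1)) ?f) with (f 0%nat + fsum (map S (seq 0 m1)) f).
        rewrite fsum_map. cbv beta. rewrite (Nat.ltb_irrefl 0), Rmult_0_l, Rplus_0_l.
        apply fsum_ext. intros n _. destruct (Nat.ltb_spec 0 (S n)); [ring|lia].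
  - apply fsum_zero. intros n1 _. apply fsum_zero. intros j _.
    unfold chi; cbn [fst snd]. destruct (Harg n1 j) as [tt ->]. rewrite sin_2kpi, Hsy. ring.
Qed.

Theorem proposition9p2 (m1 m2 : nat) (g1 g2 : Z)
  (hm1 : (1 <= m1)%nat) (hm2 : (1 <= m2)%nat)
  (hg : (g1 mod 2 = g2 mod 2)%Z) :
  (wsum m1 m2 (g1, g2) <> Czero ->
     exists h1 h2 : Z, g1 = (2 * h1 * Z.of_nat m1)%Z /\ g2 = (2 * h2 * Z.of_nat m2)%Z
                       /\ Z.Even (h1 + h2)) /\
  ((exists h1 h2 : Z, g1 = (2 * h1 * Z.of_nat m1)%Z /\ g2 = (2 * h2 * Z.of_nat m2)%Z
                       /\ Z.Even (h1 + h2)) ->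
     wsum m1 m2 (g1, g2) = Cone).
Proof.
  assert (HM1 : INR m1 <> 0) by (apply not_0_INR; lia).
  split.
  - intros Hne. destruct (classic (exists h2, g2 = (2 * h2 * Z.of_nat m2)%Z)) as [[h2 Hh2]|Hno].
    2:{ exfalso. apply Hne. apply caseA; auto. }
    assert (Ha : exists a, g1 = (2 * a)%Z).
    { exists (g1 / 2)%Z. pose proof (Z_div_mod_eq_full g1 2).
      assert (g2 mod 2 = 0)%Z by (rewrite Hh2, <- Z.mul_assoc, Z.mul_comm; apply Z_mod_mult).
      lia. }
    destruct Ha as [a Ha].
    rewrite Hh2 in Hne. rewrite caseB in Hne by auto.
    set (p := psi m1 g1 h2) in *.
    set (S0 := fsum (seq 0 m1) (fun j => cos (p / 2 + 2 * INR j * (p / 2)))).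
    assert (HR : fsum (seq 0 m1) (fun n => cos (INR n * p)) + fsum (seq 0 m1) (fun n => cos (INR (S n) * p))
                 = 2 * cos (p / 2) * S0).
    { rewrite <- fsum_plus. unfold S0. rewrite <- fsum_scal. apply fsum_ext. intros n _.
      rewrite S_INR.
      replace (INR n * p) with ((p / 2 + 2 * INR n * (p / 2)) - p / 2) by field.
      replace ((INR n + 1) * p) with ((p / 2 + 2 * INR n * (p / 2)) + p / 2) by field.
      rewrite cos_plus, cos_minus. ring. }
    assert (HS : 2 * sin (p / 2) * S0 = 0).
    { unfold S0. rewrite geo_cos.
      replace (p / 2 - p / 2 + 2 * INR m1 * (p / 2)) with (IZR (a + h2 * Z.of_nat m1) * PI).
      - rewrite sin_eq_0_1 by eauto. replace (p / 2 - p / 2) with 0 by ring. rewrite sin_0. ring.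
      - unfold p, psi. rewrite Ha, plus_IZR, !mult_IZR, <- INR_IZR_INZ. field. auto. }
    destruct (Req_dec (sin (p / 2)) 0) as [Hs|Hs].
    + apply sin_eq_0_0 in Hs. destruct Hs as [k Hk].
      exists (2 * k - h2)%Z, h2. split; [|split; [exact Hh2| exists k; lia]].
      apply eq_IZR. rewrite !mult_IZR, minus_IZR, mult_IZR, <- INR_IZR_INZ.
      assert (E : IZR g1 * PI / (2 * INR m1) = 2 * IZR k * PI - IZR h2 * PI).
      { unfold p, psi in Hk. lra. }
      replace (IZR g1) with (IZR g1 * PI / (2 * INR m1) * (2 * INR m1) / PI)
        by (field; split; [exact HM1|exact PI_neq0]).
      rewrite E. field. exact PI_neq0.
    + exfalso. apply Hne. rewrite HR.
      assert (S0 = 0) as ->.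
      { apply (Rmult_eq_reg_l (2 * sin (p / 2))); [rewrite HS; ring|lra]. }
      unfold Czero. f_equal. ring.
  - intros (h1 & h2 & Hg1 & Hg2 & [e He]). rewrite Hg2, caseB by auto.
    assert (Hp : psi m1 g1 h2 = 2 * IZR e * PI).
    { unfold psi. rewrite Hg1, !mult_IZR, <- INR_IZR_INZ.
      replace (IZR e) with ((IZR h1 + IZR h2) / 2)
        by (apply (f_equal IZR) in He; rewrite plus_IZR, mult_IZR in He; rewrite He; field).
      field. auto. }
    rewrite Hp.
    rewrite (fsum_ext _ (fun n => cos (INR n * (2 * IZR e * PI))) (fun _ => 1)).
    2:{ intros n _. replace (INR n * (2 * IZR e * PI)) with (0 + 2 * IZR (Z.of_nat n * e) * PI)
          by (rewrite mult_IZR, <- INR_IZR_INZ; ring). rewrite cos_2kpi. apply cos_0. }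
    rewrite (fsum_ext _ (fun n => cos (INR (S n) * (2 * IZR e * PI))) (fun _ => 1)).
    2:{ intros n _. replace (INR (S n) * (2 * IZR e * PI)) with (0 + 2 * IZR (Z.of_nat (S n) * e) * PI)
          by (rewrite mult_IZR, <- INR_IZR_INZ; ring). rewrite cos_2kpi. apply cos_0. }
    rewrite !fsum_const. unfold Cone. f_equal. field. auto.
Qed.
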